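(* Let $\mathbb L$ be a combinatorially indecomposable tropical Lagrangian multi-section of rank $r$ over a complete fan $\Sigma$ in $N_{\mathbb R}\cong\mathbb R^n$. For any $\tau\in\Sigma(n-1)$ and any cone $\omega'$ of $L$, the endomorphism $N_\tau(\omega')$ is nilpotent, and for any distinct cones $\omega'\ne\omega''$ of $L$ lying over the same cone $\omega\in\Sigma$, $N_\tau(\omega')N_\tau(\omega'')=0$. In particular, $[N_\tau(\omega'),N_\tau(\omega'')]=0$ for any cones $\omega',\omega''$ of $L$ lying over the same $\omega$.
   Context: $N$ lattice of rank $n$, $M=\mathrm{Hom}(N,\mathbb Z)$, $\Sigma(k)$ the $k$-dimensional cones of $\Sigma$, $\tau^\vee$ the dual cone, $U(\tau)=\mathrm{Spec}\,\mathbb C[\tau^\vee\cap M]$, $z^m$ monomials. $\mathbb L=(L,\Sigma_L,\mu,\pi,\varphi)$: $(L,\Sigma_L)$ a cone complex (finite union of closed cones each identified with a rational polyhedral cone, faces being cones, $L$ the disjoint union of relative interiors), $\mu$ a positive integer weight constant on relative interiors, $\pi$ a branched covering onto $(N_{\mathbb R},\Sigma)$ mapping cones homeomorphically onto cones with weighted fibre count $r$, $\varphi$ continuous and integral linear on each cone. $m(\sigma')\in M$ is the slope of $\varphi$ on a maximal cone $\sigma'$; for $\sigma\in\Sigma(n)$, $\sigma^{(1)},\dots,\sigma^{(r)}$ are its lifts listed with multiplicity. Combinatorially indecomposable: not combinatorially equivalent to a combinatorial union of two connected tropical Lagrangian multi-sections; such $\mathbb L$ is $(n-1)$-separable, i.e.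 distinct lifts of any $\tau\in\Sigma(n-1)$ carry distinct restrictions of $\varphi$, and its ramification locus lies in the union of cones of dimension $\le n-2$. $N_\tau(\omega')$: let $\tau=\sigma_1\cap\sigma_2$ with $\sigma_1,\sigma_2\in\Sigma(n)$. $N_\tau(\omega')$ is the endomorphism of the trivial rank $r$ bundle on $U(\tau)$ with frame $\{1(\sigma_1^{(\alpha)})\}$ whose $(\alpha,\beta)$-entry is $n^{(\alpha\beta)}_\tau(\omega')z^{m(\sigma_1^{(\alpha)})-m(\sigma_1^{(\beta)})}$, for arbitrary fixed constants $n^{(\alpha\beta)}_\tau(\omega')\in\mathbb C$, if $\omega'\subset\sigma_1^{(\alpha)}\cap\sigma_1^{(\beta)}$, $\alpha\ne\beta$ and $m(\sigma_1^{(\alpha)})-m(\sigma_1^{(\beta)})\in\tau^\vee\cap M$, and $0$ otherwise. *)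

(* Defs.v *)
From HB Require Import structures.
From mathcomp Require Import all_boot all_order all_algebra.
From mathcomp Require Import reals.
From mathcomp.real_closed Require Import complex.
From mathcomp Require Import mpoly.
From Stdlib Require Import ClassicalEpsilon.

Set Implicit Arguments.
Unset Strict Implicit.
Unset Printing Implicit Defensive.

Import GRing.Theory Num.Theory.
Local Open Scope ring_scope.

Section TLMS.
Variables (R : realType) (n : nat).

(* N = M = Z^n (row vectors), N_R = R^n; <m, v> is the natural pairing. *)
Definition pairMR (m : 'rV[int]_n) (v : 'rV[R]_n) : R :=
  \sum_(i < n) (m 0 i)%:~R * v 0 i.
Definition dotR (u v : 'rV[R]_n) : R := \sum_(i < n) u 0 i * v 0 i.
Definition toR (g : 'rV[int]_n) : 'rV[R]_n := map_mx (fun z : int => z%:~R) g.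

Definition cone_of (g : seq 'rV[int]_n) (v : 'rV[R]_n) : Prop :=
  exists a : 'I_(size g) -> R,
    (forall i, 0 <= a i) /\ v = \sum_(i < size g) a i *: toR g`_i.

Definition cone_dim (g : seq 'rV[int]_n) : nat :=
  \rank (\matrix_(i < size g, j < n) ((g`_i) 0 j)%:~R : 'M[R]_(size g, n)).

Definition is_face (A B : 'rV[R]_n -> Prop) : Prop :=
  exists u : 'rV[R]_n,
    (forall v, B v -> 0 <= dotR u v) /\
    (forall v, A v <-> (B v /\ dotR u v = 0)).

Definition same_set (A B : 'rV[R]_n -> Prop) : Prop := forall v, A v <-> B v.

Definition is_fan (Sig : finType) (gens : Sig -> seq 'rV[int]_n) : Prop :=
  [/\ forall s t, same_set (cone_of (gens s)) (cone_of (gens t)) -> s = t,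
      forall s v, cone_of (gens s) v -> cone_of (gens s) (- v) -> v = 0,
      forall s (F : 'rV[R]_n -> Prop), is_face F (cone_of (gens s)) ->
        exists t, same_set (cone_of (gens t)) F &
      forall s t,
        is_face (fun v => cone_of (gens s) v /\ cone_of (gens t) v)
                (cone_of (gens s))].

Definition complete_fan (Sig : finType) (gens : Sig -> seq 'rV[int]_n) : Prop :=
  is_fan gens /\ forall v : 'rV[R]_n, exists s, cone_of (gens s) v.

Definition sface (Sig : finType) (gens : Sig -> seq 'rV[int]_n) (t s : Sig) :=
  is_face (cone_of (gens t)) (cone_of (gens s)).

(* Tropical Lagrangian multi-section of rank r over the fan (Sig, gens):
   Lc = cones of L, lface d c <-> d is a face of c (d is contained in c),
   pi c = the cone of Sigma onto which c is mapped homeomorphically,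
   mu c = the weight on the relative interior of c,
   slope c = an element of M with phi(x) = <slope c, pi x> for x in c. *)
Definition is_TLMS (Sig : finType) (gens : Sig -> seq 'rV[int]_n)
  (Lc : finType) (lface : rel Lc) (pi : Lc -> Sig) (mu : Lc -> nat)
  (slope : Lc -> 'rV[int]_n) (r : nat) : Prop :=
  [/\
      [/\ forall c, lface c c,
          forall c d, lface c d -> lface d c -> c = d &
          forall c d e, lface c d -> lface d e -> lface c e],
      (* pi maps faces to faces, and each cone homeomorphically onto its image:
         faces of c correspond bijectively to faces of pi c *)
      forall d c, lface d c -> sface gens (pi d) (pi c),
      forall c t, sface gens t (pi c) ->
        exists d, [/\ lface d c, pi d = t &
                      forall d', lface d' c -> pi d' = t -> d' = d],
      (* positive weights; branched covering with weighted fibre count r *)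
      [/\ forall c, (0 < mu c)%N,
          forall s, (\sum_(c | pi c == s) mu c)%N = r &
          forall d s, sface gens (pi d) s ->
            (\sum_(c | lface d c && (pi c == s)) mu c)%N = mu d] &
      (* phi continuous: restrictions agree on common faces *)
      forall d c, lface d c -> forall v, cone_of (gens (pi d)) v ->
        pairMR (slope c) v = pairMR (slope d) v].

Definition separable_codim1 (Sig : finType) (gens : Sig -> seq 'rV[int]_n)
  (Lc : finType) (pi : Lc -> Sig) (slope : Lc -> 'rV[int]_n) : Prop :=
  forall tau, (cone_dim (gens tau)).+1 = n ->
  forall t1 t2, pi t1 = tau -> pi t2 = tau -> t1 <> t2 ->
    exists v, cone_of (gens tau) v /\ pairMR (slope t1) v <> pairMR (slope t2) v.

Definition ramification_codim2 (Sig : finType) (gens : Sig -> seq 'rV[int]_n)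
  (Lc : finType) (pi : Lc -> Sig) (mu : Lc -> nat) : Prop :=
  forall c, (1 < mu c)%N -> ((cone_dim (gens (pi c))).+2 <= n)%N.

(* consequences of combinatorial indecomposability recorded in the paper *)
Definition comb_indecomposable (Sig : finType) (gens : Sig -> seq 'rV[int]_n)
  (Lc : finType) (pi : Lc -> Sig) (mu : Lc -> nat)
  (slope : Lc -> 'rV[int]_n) : Prop :=
  separable_codim1 gens pi slope /\ ramification_codim2 gens pi mu.

Definition in_dual (g : seq 'rV[int]_n) (m : 'rV[int]_n) : Prop :=
  forall v, cone_of g v -> 0 <= pairMR m v.

(* The Laurent monomial z^m, inside the fraction field of C[z_1..z_n]
   (which contains C[M] and hence C[tau^dual cap M]). *)
Definition CC := complex R.
Definition Frac := {fraction {mpoly CC[n]}}.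
Definition zmon (m : 'rV[int]_n) : Frac :=
  \prod_(i < n) (tofrac ('X_i : {mpoly CC[n]})) ^ (m 0 i).

(* N_tau(omega'): rows/columns indexed by the lifts sigma_1^(alpha) given by
   the enumeration lift : 'I_r -> Lc; ncst = the constants n^(alpha beta). *)
Definition Nmx (Sig : finType) (gens : Sig -> seq 'rV[int]_n)
  (Lc : finType) (lface : rel Lc) (slope : Lc -> 'rV[int]_n) (r : nat)
  (tau : Sig) (lift : 'I_r -> Lc) (ncst : 'I_r -> 'I_r -> CC) (w : Lc)
  : 'M[Frac]_r :=
  \matrix_(a, b)
    if lface w (lift a) && lface w (lift b) && (a != b) then
      if excluded_middle_informative
           (in_dual (gens tau) (slope (lift a) - slope (lift b)))
      then tofrac (ncst a b)%:MP * zmon (slope (lift a) - slope (lift b))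
      else 0
    else 0.

End TLMS.

(* Main.v *)
Require Import Defs.
From HB Require Import structures.
From mathcomp Require Import all_boot all_order all_algebra.
From mathcomp Require Import reals.
From mathcomp.real_closed Require Import complex.
From mathcomp Require Import mpoly.
Import GRing.Theory Num.Theory.
Local Open Scope ring_scope.

From Stdlib Require Import ClassicalEpsilon.
From mathcomp Require Import zify.

Lemma mx_nilp_rank (F : pzRingType) (r : nat) (A : 'M[F]_r) (h : 'I_r -> nat) :
  (forall a b, A a b != 0 -> (h a < h b)%N) -> (forall b, (h b < r)%N) ->
  A ^+ r = 0.
Proof.
move=> HA Hr.
have key : forall k a b, (A ^+ k) a b != 0 -> (h a + k <= h b)%N.
  elim=> [|k IH] a b.
    rewrite expr0 /GRing.one /= mxE addn0; case E: (@eq_op _ a b); first by rewrite (eqP E). by rewrite eqxx.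
  rewrite exprSr -mulmxE mxE => Hs.
  have [j Hj] : exists j, (A ^+ k) a j * A j b != 0.
    apply/existsP; apply: contraNT Hs; rewrite negb_exists => /forallP Hall.
    by apply/eqP; apply: big1 => j _; apply/eqP/negbNE; apply: Hall.
  have H1 : (A ^+ k) a j != 0 by apply: contraNneq Hj => ->; rewrite mul0r.
  have H2 : A j b != 0 by apply: contraNneq Hj => ->; rewrite mulr0.
  have := IH _ _ H1; have := HA _ _ H2; rewrite addnS; move=> h1 h2.
  exact: leq_ltn_trans h2 h1.
apply/matrixP => a b; rewrite mxE; apply/eqP/negbNE/negP => /key.
by rewrite leqNgt (leq_trans (Hr b)) // leq_addl.
Qed.

Lemma pairMRD (R : realType) (n : nat) (x y : 'rV[int]_n) (v : 'rV[R]_n) :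
  pairMR (x + y) v = pairMR x v + pairMR y v.
Proof.
rewrite /pairMR -big_split /=; apply: eq_bigr => i _.
by rewrite mxE intrD mulrDl.
Qed.

Lemma pairMRN (R : realType) (n : nat) (x : 'rV[int]_n) (v : 'rV[R]_n) :
  pairMR (- x) v = - pairMR x v.
Proof.
rewrite /pairMR -sumrN; apply: eq_bigr => i _.
by rewrite mxE intrN mulNr.
Qed.

Theorem lemma4p12 (R : realType) (n : nat)
  (Sig : finType) (gens : Sig -> seq 'rV[int]_n)
  (Lc : finType) (lface : rel Lc) (pi : Lc -> Sig) (mu : Lc -> nat)
  (slope : Lc -> 'rV[int]_n) (r : nat)
  (HSig : complete_fan R gens)
  (HL : is_TLMS R gens lface pi mu slope r)
  (Hind : comb_indecomposable R gens pi mu slope)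
  (tau sigma1 sigma2 : Sig)
  (Htau : (cone_dim R (gens tau)).+1 = n)
  (Hs1 : cone_dim R (gens sigma1) = n) (Hs2 : cone_dim R (gens sigma2) = n)
  (Hint : forall v : 'rV[R]_n, cone_of (gens tau) v <->
            (cone_of (gens sigma1) v /\ cone_of (gens sigma2) v))
  (lift : 'I_r -> Lc)
  (Hlift : forall c, #|[set a | lift a == c]| = (if pi c == sigma1 then mu c else 0%N))
  (ncst : Lc -> 'I_r -> 'I_r -> CC R) :
  let N := fun w => Nmx gens lface slope tau lift (ncst w) w in
  [/\ forall w, exists k, N w ^+ k = 0,
      forall w1 w2, w1 <> w2 -> pi w1 = pi w2 -> N w1 *m N w2 = 0 &
      forall w1 w2, pi w1 = pi w2 -> N w1 *m N w2 - N w2 *m N w1 = 0].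
Proof.
move=> N.
case: HL => [[Hrefl Hanti Htrans] H2 H3 [Hmu Hsum Hfib] Hcont].
case: HSig => [[Hf1 Hf2 Hf3 Hf4] Hcomp].
case: Hind => [Hsep Hram].
have P2 : forall w1 w2, w1 <> w2 -> pi w1 = pi w2 -> N w1 *m N w2 = 0.
  move=> w1 w2 Hne Hpi; apply/matrixP => a c; rewrite !mxE.
  apply: big1 => b _; rewrite !mxE.
  case E1: (lface w1 (lift b)); last by rewrite andbF /= mul0r.
  case E2: (lface w2 (lift b)); last by rewrite /= mulr0.
  exfalso; apply: Hne.
  have Hsf : sface R gens (pi w1) (pi (lift b)) by apply: H2.
  have [d [_ _ Hu]] := H3 (lift b) (pi w1) Hsf.
  by rewrite (Hu w1 E1 erefl) (Hu w2 E2 (esym Hpi)).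
split => //; last first.
  move=> w1 w2 Hpi; have [->|Hne] := eqVneq w1 w2; first by rewrite subrr.
  rewrite (P2 w1 w2) ?(P2 w2 w1) ?subrr //; first by apply/eqP; rewrite eq_sym.
  exact/eqP.
have Hts : sface R gens tau sigma1.
  have [u [Hu1 Hu2]] := Hf4 sigma1 sigma2.
  exists u; split => // v; rewrite Hint; exact: Hu2.
have Hram' : forall c, (1 < mu c)%N -> ((cone_dim R (gens (pi c))).+2 <= n)%N.
  exact: Hram.
have pi_lift : forall a, pi (lift a) = sigma1.
  move=> a; have := Hlift (lift a); case: eqP => // _.
  move/eqP; rewrite cards_eq0 => /eqP/setP/(_ a); rewrite !inE eqxx //.
have mu_lift : forall a, mu (lift a) = 1%N.
  move=> a; have := Hmu (lift a); have := Hram' (lift a); rewrite pi_lift Hs1.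
  case: (mu (lift a)) => [|[|m]] //= H _; have := H isT; lia.
have lift_inj : injective lift.
  move=> a b Hab; have := Hlift (lift a); rewrite pi_lift eqxx mu_lift => Hc.
  have /card_le1_eqP H1 : (#|[set a' | lift a' == lift a]| <= 1)%N by rewrite Hc.
  by apply: H1; rewrite inE ?Hab eqxx.
pose D a b := in_dual R (gens tau) (slope (lift a) - slope (lift b)).
have Dtrans : forall a b c, D a b -> D b c -> D a c.
  move=> a b c Hab Hbc v Hv.
  have -> : slope (lift a) - slope (lift c) =
    (slope (lift a) - slope (lift b)) + (slope (lift b) - slope (lift c)).
    by rewrite addrA subrK.
  by rewrite pairMRD addr_ge0 //; [apply: Hab | apply: Hbc].
have Danti : forall a b, a != b -> D a b -> D b a -> False.
  move=> a b Hab Dab Dba.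
  have Hlab : lift a != lift b by apply: contraNneq Hab => /lift_inj ->.
  have := H3 (lift a) tau; rewrite pi_lift => /(_ Hts) [da [Hda1 Hda2 _]].
  have := H3 (lift b) tau; rewrite pi_lift => /(_ Hts) [db [Hdb1 Hdb2 _]].
  have Hdd : da <> db.
    move=> Edd; subst db.
    have := Hfib da sigma1; rewrite Hda2 => /(_ Hts).
    rewrite (bigD1 (lift a)) /=; last by rewrite Hda1 pi_lift eqxx.
    rewrite (bigD1 (lift b)) /=; last by rewrite Hdb1 pi_lift eqxx eq_sym Hlab.
    rewrite !mu_lift => Hs.
    have := Hram' da; rewrite Hda2 => H; case: (ltnP 1 (mu da)) => [/H|]; lia.
  have [v [Hv Hne]] := Hsep tau Htau da db Hda2 Hdb2 Hdd.
  have Ea := Hcont da (lift a) Hda1 v; rewrite Hda2 in Ea; have {}Ea := Ea Hv.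
  have Eb := Hcont db (lift b) Hdb1 v; rewrite Hdb2 in Eb; have {}Eb := Eb Hv.
  apply: Hne; rewrite -Ea -Eb.
  have := Dab v Hv; have := Dba v Hv.
  rewrite !pairMRD !pairMRN !subr_ge0 => G1 G2.
  by apply: Order.POrderTheory.le_anti; rewrite G1 G2.
pose prec a b := (a != b) && (if excluded_middle_informative (D a b) then true else false).
pose h b := #|[set c | prec c b]|.
have prec_lt : forall a b, prec a b -> (h a < h b)%N.
  move=> a b Hab; apply: proper_card; apply/properP; split.
    apply/subsetP => c; rewrite !inE /prec.
    case/andP: Hab => Hab; case: excluded_middle_informative => // HDab _.
    case/andP => Hca; case: excluded_middle_informative => // HDca _.
    have HDcb := Dtrans _ _ _ HDca HDab.
    destruct (excluded_middle_informative (D c b)) as [Hx|F]; last by case: (F HDcb).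
    rewrite andbT.
    by apply/eqP => Ecb; subst c; exact: (Danti a b Hab HDab HDca).
  exists a; rewrite !inE //= /prec eqxx //.
have h_lt : forall b, (h b < r)%N.
  move=> b; rewrite -[r]card_ord -cardsT; apply: proper_card; apply/properP; split.
    exact: subsetT.
  by exists b; rewrite !inE // /prec eqxx.
move=> w; exists r; apply: (@mx_nilp_rank _ _ _ h) => // a b.
rewrite /N /Nmx mxE.
case: ifP => [/andP [_ Hab]|]; last by rewrite eqxx.
case: excluded_middle_informative => HD; last by rewrite eqxx.
move=> _; apply: prec_lt; rewrite /prec Hab /=.
by case: excluded_middle_informative.
Qed.
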